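(* Let $I$ be a finite set of positive integers and $m=\max(I\cup\{0\})$. Then $(-1)^m d(I;-1)\ge 0$. Equivalently, if $d(I;n)=\sum_{k=0}^m(-1)^{m-k}c_k(I)\binom{n+1}{k}$ is the expansion of the descent polynomial in the basis $\{\binom{n+1}{k}\}_{k\ge 0}$, then $c_0(I)\ge 0$.
   Context: For $n>m$, $d(I;n)$ is the number of permutations $\pi\in\mathfrak S_n$ with $\{i\mid\pi_i>\pi_{i+1}\}=I$; it is a polynomial in $n$ of degree $m$, extended to all complex arguments, and $d(I;-1)$ is its value at $-1$ (note $d(I;-1)=(-1)^m c_0(I)$). *)

(* Defs.v *)
From HB Require Import structures.
From mathcomp Require Import all_boot all_order all_algebra all_fingroup.
Set Implicit Arguments. Unset Strict Implicit. Unset Printing Implicit Defensive.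
Import Order.TTheory GRing.Theory Num.Theory.

(* one-line notation pi = pi_1 ... pi_n of s : 'S_n (values 0..n-1) *)
Definition perm_word (n : nat) (s : 'S_n) : seq nat := [seq val (s i) | i <- enum 'I_n].

(* i (1-indexed, 1 <= i < n) is a descent: pi_i > pi_{i+1} *)
Definition is_descent (n : nat) (s : 'S_n) (i : nat) : bool :=
  nth 0 (perm_word s) i.-1 > nth 0 (perm_word s) i.

Definition descent_set (n : nat) (s : 'S_n) : seq nat :=
  [seq i <- iota 1 n.-1 | is_descent s i].

Definition same_set (A B : seq nat) : bool :=
  all (fun x => x \in B) A && all (fun x => x \in A) B.

Definition dcount (I : seq nat) (n : nat) : nat :=
  #|[pred s : 'S_n | same_set (descent_set s) I]|.

Definition maxI (I : seq nat) : nat := \max_(i <- I) i.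

(* Main.v *)
Require Import Defs.
From HB Require Import structures.
From mathcomp Require Import all_boot all_order all_algebra all_fingroup.
From mathcomp Require Import zify ring lra.
Import Order.TTheory GRing.Theory Num.Theory.
Set Implicit Arguments. Unset Strict Implicit. Unset Printing Implicit Defensive.

Lemma size_pw n (s : 'S_n) : size (perm_word s) = n.
Proof. by rewrite /perm_word size_map size_enum_ord. Qed.

Lemma nth_pw n (s : 'S_n) i (hi : i < n) : nth 0 (perm_word s) i = val (s (Ordinal hi)).
Proof.
rewrite /perm_word (nth_map (Ordinal hi)) ?size_enum_ord //=.
by congr (val (s _)); apply: val_inj; rewrite /= nth_enum_ord.
Qed.

Lemma mem_pw n (s : 'S_n) x : (x \in perm_word s) = (x < n).
Proof.
apply/idP/idP.
  by rewrite /perm_word => /mapP [i _ ->]; apply: ltn_ord.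
move=> hx; apply/mapP; exists ((s^-1)%g (Ordinal hx)); first by rewrite mem_enum.
by rewrite /= permKV.
Qed.

Lemma uniq_pw n (s : 'S_n) : uniq (perm_word s).
Proof.
rewrite /perm_word map_inj_uniq ?enum_uniq // => i j /val_inj; exact: perm_inj.
Qed.

Lemma perm_pw n (s : 'S_n) : perm_eq (perm_word s) (iota 0 n).
Proof.
apply: uniq_perm; rewrite ?uniq_pw ?iota_uniq // => x.
by rewrite mem_pw mem_iota.
Qed.

Lemma pw_inj n : injective (@perm_word n).
Proof.
move=> s t e; apply/permP => i; apply: val_inj.
have := congr1 (fun w => nth 0 w i) e.
rewrite !(nth_pw _ (ltn_ord i)).
by have -> : Ordinal (ltn_ord i) = i by apply: val_inj.
Qed.

Definition mkperm n (w : seq nat) : 'S_n :=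
  @insubd _ _ 'S_n (1%g : 'S_n) [ffun i : 'I_n => insubd i (nth 0 w i) : 'I_n].

Lemma mkpermK n w : perm_eq w (iota 0 n) -> perm_word (mkperm n w) = w.
Proof.
move=> pw.
have hs : size w = n by rewrite (perm_size pw) size_iota.
have hu : uniq w by rewrite (perm_uniq pw) iota_uniq.
have hlt k : k < n -> nth 0 w k < n.
  by move=> hk; have := @mem_nth _ 0 w k; rewrite hs (perm_mem pw) mem_iota /= => /(_ hk).
have vE (i : 'I_n) : val (insubd i (nth 0 w i) : 'I_n) = nth 0 w i.
  by rewrite val_insubd hlt.
have inj : injectiveb [ffun i : 'I_n => insubd i (nth 0 w i) : 'I_n].
  apply/injectiveP => i j; rewrite !ffunE => /(congr1 val).
  rewrite !vE => /eqP; rewrite nth_uniq ?hs //.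
  by move=> /eqP /val_inj.
have E i : val (mkperm n w i) = nth 0 w i.
  by rewrite /mkperm -pvalE val_insubd inj ffunE vE.
apply: (@eq_from_nth _ 0); rewrite size_pw ?hs // => i hi.
by rewrite (nth_pw _ hi) E.
Qed.

Definition desc (w : seq nat) := [seq i <- iota 1 (size w).-1 | nth 0 w i.-1 > nth 0 w i].
Definition gd (J w : seq nat) := same_set (desc w) J.
Definition dsc (w : seq nat) i := (0 < i < size w) && (nth 0 w i.-1 > nth 0 w i).

Lemma mem_desc w i : (i \in desc w) = dsc w i.
Proof.
rewrite /desc mem_filter mem_iota /dsc andbC; congr (_ && _).
case: (size w) => [|k] /=; first by case: i.
by rewrite add1n ltnS.
Qed.

Lemma gdP J w : reflect (forall i, (i \in J) = dsc w i) (gd J w).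
Proof.
apply: (iffP andP) => [[/allP H1 /allP H2] i | H].
  apply/idP/idP => h; first by rewrite -mem_desc; exact: H2.
  by apply: H1; rewrite mem_desc.
by split; apply/allP => i; rewrite H mem_desc.
Qed.

Lemma dcountE J n : dcount J n = #|[pred s : 'S_n | gd J (perm_word s)]|.
Proof.
apply: eq_card => s; rewrite !inE /= /gd /descent_set /desc size_pw.
by [].
Qed.

Lemma gd_eq J J' w : J =i J' -> gd J w = gd J' w.
Proof.
move=> e; apply/gdP/gdP => H i; by rewrite -H e.
Qed.

Lemma dcount_eq J J' n : J =i J' -> dcount J n = dcount J' n.
Proof. by move=> e; rewrite !dcountE; apply: eq_card => s; rewrite !inE (gd_eq _ e). Qed.

Lemma dsc_map f w :
  (forall i j, i < size w -> j < size w ->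
     (f (nth 0 w i) < f (nth 0 w j)) = (nth 0 w i < nth 0 w j)) ->
  dsc (map f w) =1 dsc w.
Proof.
move=> H i; rewrite /dsc size_map.
case: (boolP (0 < i < size w)) => //= /andP [h0 h1].
by rewrite !(nth_map 0) ?H //; lia.
Qed.

Lemma gd_map J f w :
  (forall i j, i < size w -> j < size w ->
     (f (nth 0 w i) < f (nth 0 w j)) = (nth 0 w i < nth 0 w j)) ->
  gd J (map f w) = gd J w.
Proof.
move=> H; apply/gdP/gdP => H' i; by rewrite H' (dsc_map H).
Qed.

Lemma dsc_cat u v i :
  dsc (u ++ v) i =
  if i < size u then dsc u i
  else if i == size u then [&& 0 < i, 0 < size v & nth 0 v 0 < nth 0 u i.-1]
  else dsc v (i - size u).
Proof.
rewrite /dsc size_cat !nth_cat.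
case: (ltnP i (size u)) => h1.
  have -> : i.-1 < size u by lia.
  by congr (_ && _); lia.
case: eqP => h2.
  subst i; rewrite subnn.
  case: (posnP (size u)) => h3 /=.
    by [].
  have -> : (size u).-1 < size u by lia.
  case: (posnP (size v)) => h4 /=.
    by rewrite h4 addn0 ltnn.
  by rewrite -{1}(addn0 (size u)) ltn_add2l h4.
have -> : i.-1 < size u = false by lia.
have -> : i.-1 - size u = (i - size u).-1 by lia.
by congr (_ && _); lia.
Qed.

Lemma gd_split J m w : 0 < m -> m <= size w -> all (fun j => 0 < j < m) J ->
  (gd J w || gd (m :: J) w) = gd J (take m w) && gd [::] (drop m w).
Proof.
move=> m0 mw /allP HJ.
have hJ i : i \in J -> 0 < i < m by move/HJ.
have mJ : m \notin J by apply/negP => /hJ; lia.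
have sz : size (take m w) = m by rewrite size_takel.
rewrite -{1 2}(cat_take_drop m w).
have D i : dsc (take m w ++ drop m w) i =
  if i < m then dsc (take m w) i
  else if i == m then [&& 0 < i, 0 < size (drop m w)
            & nth 0 (drop m w) 0 < nth 0 (take m w) i.-1]
  else dsc (drop m w) (i - m) by rewrite dsc_cat sz.
apply/idP/idP.
  move=> H; apply/andP; split; apply/gdP => i.
  - case: (ltnP i m) => him.
      have := D i; rewrite him => <-.
      case/orP: H => /gdP <- //; rewrite inE.
      by have -> : (i == m) = false by lia.
    have -> : (i \in J) = false by apply/negP => /hJ; lia.
    by rewrite /dsc sz; lia.
  - rewrite in_nil; case: (posnP i) => [->|ip]; first by rewrite /dsc.
    have := D (i + m); rewrite ltnNge leq_addl /= addnK.
    have -> : (i + m == m) = false by lia.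
    move=> <-; case/orP: H => /gdP <-; rewrite ?inE;
      (have -> : (i + m \in J) = false by apply/negP => /hJ; lia); lia.
move=> /andP [/gdP H1 /gdP H2].
have key i : i != m -> (i \in J) = dsc (take m w ++ drop m w) i.
  move=> ne; rewrite D; case: ltnP => him; first by rewrite H1.
  rewrite (negPf ne) -H2 in_nil.
  by apply/negP => /hJ; lia.
case: (boolP (dsc (take m w ++ drop m w) m)) => hm.
  apply/orP; right; apply/gdP => i; rewrite inE.
  by case: (eqVneq i m) => [->|ne] //=; rewrite key.
apply/orP; left; apply/gdP => i.
by case: (eqVneq i m) => [->|ne]; [rewrite (negPf hm) (negPf mJ) | rewrite key].
Qed.

Lemma gd_disj J m w : all (fun j => j < m) J -> gd J w -> gd (m :: J) w -> False.
Proof.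
move=> /allP HJ /gdP H1 /gdP H2.
have := H2 m; rewrite inE eqxx -H1 /= => /esym hm.
by have := HJ _ hm; rewrite ltnn.
Qed.

Lemma card_le_img (T : finType) (P : pred T) n (Q : pred (seq nat)) (f : T -> seq nat) :
  (forall x, P x -> perm_eq (f x) (iota 0 n) && Q (f x)) ->
  {in P &, injective f} ->
  #|P| <= #|[pred s : 'S_n | Q (perm_word s)]|.
Proof.
move=> H inj.
have gE x : P x -> perm_word (mkperm n (f x)) = f x.
  by move=> Px; apply: mkpermK; case/andP: (H x Px).
rewrite -(@card_in_imset _ _ (fun x => mkperm n (f x)) P).
  apply: subset_leq_card; apply/subsetP => s /imsetP [x Px ->].
  by rewrite inE gE //; case/andP: (H x Px).
move=> x y Px Py /(congr1 (@perm_word n)); rewrite !gE // => e; exact: inj.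
Qed.

Lemma card_le_img2 (T1 T2 : finType) (P1 : pred T1) (P2 : pred T2) n
  (Q : pred (seq nat)) (f1 : T1 -> seq nat) (f2 : T2 -> seq nat) :
  (forall x, P1 x -> perm_eq (f1 x) (iota 0 n) && Q (f1 x)) ->
  (forall x, P2 x -> perm_eq (f2 x) (iota 0 n) && Q (f2 x)) ->
  {in P1 &, injective f1} -> {in P2 &, injective f2} ->
  (forall x y, P1 x -> P2 y -> f1 x != f2 y) ->
  #|P1| + #|P2| <= #|[pred s : 'S_n | Q (perm_word s)]|.
Proof.
move=> H1 H2 inj1 inj2 dj.
have gE1 x : P1 x -> perm_word (mkperm n (f1 x)) = f1 x.
  by move=> Px; apply: mkpermK; case/andP: (H1 x Px).
have gE2 x : P2 x -> perm_word (mkperm n (f2 x)) = f2 x.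
  by move=> Px; apply: mkpermK; case/andP: (H2 x Px).
set A1 := [set mkperm n (f1 x) | x in P1].
set A2 := [set mkperm n (f2 x) | x in P2].
have c1 : #|A1| = #|P1|.
  apply: card_in_imset => x y Px Py /(congr1 (@perm_word n)); rewrite !gE1 // => e.
  exact: inj1.
have c2 : #|A2| = #|P2|.
  apply: card_in_imset => x y Px Py /(congr1 (@perm_word n)); rewrite !gE2 // => e.
  exact: inj2.
have c0 : A1 :&: A2 = set0.
  apply/setP => s; rewrite !inE; apply/negP => /andP [/imsetP [x Px ->]].
  move=> /imsetP [y Py /(congr1 (@perm_word n))]; rewrite gE1 // gE2 // => e.
  by move: (dj x y Px Py); rewrite e eqxx.
rewrite -c1 -c2 -cardsUI c0 cards0 addn0.
apply: subset_leq_card; apply/subsetP => s; rewrite !inE.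
case/orP => /imsetP [x Px ->].
  by rewrite gE1 //; case/andP: (H1 x Px).
by rewrite gE2 //; case/andP: (H2 x Px).
Qed.

Lemma pw1 n : perm_word (1%g : 'S_n) = iota 0 n.
Proof.
apply: (@eq_from_nth _ 0); rewrite size_pw ?size_iota // => i hi.
by rewrite (nth_pw _ hi) perm1 nth_iota.
Qed.

Lemma dsc_pw_lt n (s : 'S_n) i : 0 < i < n ->
  dsc (perm_word s) i = (nth 0 (perm_word s) i < nth 0 (perm_word s) i.-1).
Proof. by move=> h; rewrite /dsc size_pw h. Qed.

Lemma dcount_nil n : dcount [::] n = 1.
Proof.
rewrite dcountE; apply: (@eq_card1 _ (1%g : 'S_n)) => s; rewrite !inE.
apply/idP/eqP => [/gdP H|->]; last first.
  apply/gdP => i; rewrite in_nil pw1 /dsc size_iota.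
  case: (boolP (0 < i < n)) => //= h.
  by rewrite !nth_iota; lia.
apply: pw_inj; rewrite pw1.
apply: (sorted_eq leq_trans anti_leq); rewrite ?iota_sorted ?perm_pw //.
apply/(sortedP 0) => i hi.
have := H i.+1; rewrite in_nil /dsc hi /= => /esym/negbT.
by rewrite -leqNgt.
Qed.

Lemma dcount_mono K n : dcount K n <= dcount K n.+1.
Proof.
rewrite !dcountE.
apply: (@card_le_img _ _ _ _ (fun s : 'S_n => perm_word s ++ [:: n])).
  move=> s /gdP H; apply/andP; split.
    by rewrite -addn1 iotaD add0n perm_cat2r perm_pw.
  apply/gdP => i; rewrite H dsc_cat size_pw.
  case: ltnP => // hi.
  have -> : dsc (perm_word s) i = false by rewrite /dsc size_pw; lia.
  case: eqP => [e|ne]; last by rewrite /dsc /=; lia.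
  case: (posnP i) => [|ip] //=.
  have : nth 0 (perm_word s) i.-1 < n.
    by rewrite -(mem_pw s) mem_nth // size_pw; lia.
  lia.
move=> s t _ _ /(congr1 (take n)); rewrite !take_size_cat ?size_pw //.
exact: pw_inj.
Qed.

Lemma gd_addn J k w : gd J (map (addn k) w) = gd J w.
Proof. by apply: gd_map => i j _ _; rewrite ltn_add2l. Qed.

Lemma dsc_addn k w : dsc (map (addn k) w) =1 dsc w.
Proof. by apply: dsc_map => i j _ _; rewrite ltn_add2l. Qed.

Lemma pw_split m (t : 'S_m.+1) :
  perm_word t = take m (perm_word t) ++ [:: nth 0 (perm_word t) m].
Proof.
rewrite -{1}(cat_take_drop m (perm_word t)); congr (_ ++ _).
by rewrite (drop_nth 0) ?size_pw // drop_oversize ?size_pw.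
Qed.

Lemma dcount_A J m : 0 < m -> all (fun j => 0 < j < m) J ->
  dcount J m + dcount J m.+1 <= dcount (m :: J) m.+2.
Proof.
move=> m0 /allP HJ.
have hJ i : i \in J -> 0 < i < m by move/HJ.
rewrite !dcountE.
apply: (@card_le_img2 _ _ _ _ _ _
   (fun s : 'S_m => map (addn 2) (perm_word s) ++ [:: 0; 1])
   (fun t : 'S_m.+1 => map (addn 1) (take m (perm_word t)) ++
                        [:: 0; (nth 0 (perm_word t) m).+1])).
- move=> s /gdP H; apply/andP; split.
    rewrite perm_catC.
    have -> : iota 0 m.+2 = [:: 0; 1] ++ iota 2 m by rewrite -[m.+2]/(2+m) iotaD.
    rewrite perm_cat2l.
    have -> : iota 2 m = map (addn 2) (iota 0 m) by rewrite -iotaDl addn0.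
    exact: perm_map (perm_pw s).
  apply/gdP => i; rewrite inE dsc_cat size_map size_pw.
  case: ltnP => hi.
    by rewrite dsc_addn -H; have -> : (i == m) = false by lia.
  case: eqP => [->|ne] /=.
    by rewrite m0 (nth_map 0) ?size_pw //; lia.
  have -> : (i \in J) = false by apply/negP => /hJ; lia.
  have [->|h2] : i - m = 1 \/ 2 <= i - m by lia.
    by [].
  by rewrite /dsc /=; have -> : (0 < i - m < 2) = false by lia.
- move=> t /gdP H.
  have sz : size (take m (perm_word t)) = m by rewrite size_takel ?size_pw.
  apply/andP; split.
    have -> : iota 0 m.+2 = [:: 0] ++ map (addn 1) (iota 0 m.+1).
      by rewrite /= -iotaDl.
    rewrite -[[:: 0; _]]/([:: 0] ++ [:: (nth 0 (perm_word t) m).+1]).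
    rewrite perm_catCA perm_cat2l.
    have -> : [:: (nth 0 (perm_word t) m).+1] = map (addn 1) [:: nth 0 (perm_word t) m] by [].
    by rewrite -map_cat -pw_split perm_map // perm_pw.
  apply/gdP => i; rewrite inE dsc_cat size_map sz.
  case: ltnP => hi.
    rewrite dsc_addn; have -> : (i == m) = false by lia.
    rewrite H; have := dsc_cat (take m (perm_word t)) [:: nth 0 (perm_word t) m] i.
    by rewrite sz hi -pw_split => ->.
  case: eqP => [->|ne] /=.
    by rewrite m0 (nth_map 0) ?sz //; lia.
  have -> : (i \in J) = false by apply/negP => /hJ; lia.
  have [->|h2] : i - m = 1 \/ 2 <= i - m by lia.
    by [].
  by rewrite /dsc /=; have -> : (0 < i - m < 2) = false by lia.
- have h2 (s : 'S_m) : size (map (addn 2) (perm_word s)) = m by rewrite size_map size_pw.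
  move=> s1 s2 _ _ /(congr1 (take m)).
  rewrite !take_size_cat ?h2 // => /(inj_map (@addnI 2)).
  exact: pw_inj.
- move=> t1 t2 _ _ e.
  have sz i : size (take m (perm_word (i : 'S_m.+1))) = m by rewrite size_takel ?size_pw.
  have e1 := congr1 (take m) e; rewrite !take_size_cat ?size_map ?sz // in e1.
  have e2 := congr1 (fun w => nth 0 w m.+1) e.
  rewrite /= !nth_cat !size_map !sz ltnNge leqnSn subSnn /= in e2.
  case: e2 => e2.
  apply: pw_inj; rewrite (pw_split t1) (pw_split t2) e2.
  by move/(inj_map (@addnI 1)): e1 => ->.
- move=> s t _ /gdP H.
  have sz : size (take m (perm_word t)) = m by rewrite size_takel ?size_pw.
  apply/negP => /eqP /(congr1 (fun w => nth 0 w m.+1)).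
  have h2 : size (map (addn 2) (perm_word s)) = m by rewrite size_map size_pw.
  rewrite !nth_cat h2 size_map sz ltnNge leqnSn subSnn /= => -[] e.
  have := H m; rewrite /dsc size_pw m0 ltnSn /=.
  have -> : (m \in J) = false by apply/negP => /hJ; lia.
  move=> /esym /negbT; rewrite -e -leqNgt.
  have hu := uniq_pw t.
  have : nth 0 (perm_word t) m.-1 != nth 0 (perm_word t) m.
    by rewrite nth_uniq ?size_pw //; lia.
  lia.
Qed.

Definition cA n (A : {set 'I_n}) : seq nat := map val (enum A).

Lemma cA_sorted n (A : {set 'I_n}) : sorted ltn (cA A).
Proof.
apply: (subseq_sorted ltn_trans (s2 := iota 0 n)); last exact: iota_ltn_sorted.
rewrite -val_enum_ord; apply: map_subseq.
rewrite -deprecated_filter_index_enum enumT.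
rewrite /index_enum; case: index_enum_key => /=.
exact: filter_subseq.
Qed.

Lemma cA_uniq n (A : {set 'I_n}) : uniq (cA A).
Proof. exact: (sorted_uniq ltn_trans ltnn (cA_sorted A)). Qed.

Lemma size_cA n (A : {set 'I_n}) : size (cA A) = #|A|.
Proof. by rewrite size_map -cardE. Qed.

Lemma mem_cA n (A : {set 'I_n}) (i : 'I_n) : (val i \in cA A) = (i \in A).
Proof. by rewrite mem_map ?mem_enum //; exact: val_inj. Qed.

Lemma nth_mono s i j : sorted ltn s -> i < size s -> j < size s ->
  (nth 0 s i < nth 0 s j) = (i < j).
Proof.
move=> ss hi hj.
have H := sorted_ltn_nth ltn_trans 0 ss.
case: (ltngtP i j) => h.
- exact: H.
- by apply/negbTE; rewrite -leqNgt ltnW // H.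
- by rewrite h ltnn.
Qed.

Lemma perm_cAB n (A : {set 'I_n}) : perm_eq (cA A ++ cA (~: A)) (iota 0 n).
Proof.
apply: uniq_perm; rewrite ?iota_uniq //.
  rewrite /cA -map_cat map_inj_uniq; last exact: val_inj.
  rewrite cat_uniq !enum_uniq /= andbT; apply/hasP => -[x].
  by rewrite !mem_enum inE => /negP nx ax.
move=> x; rewrite mem_iota /= add0n mem_cat.
apply/idP/idP.
  by rewrite /cA; case/orP => /mapP [i _ ->]; apply: ltn_ord.
move=> hx; have := mem_cA A (Ordinal hx); have := mem_cA (~: A) (Ordinal hx).
rewrite inE /=; case: (Ordinal hx \in A) => -> -> //; by rewrite orbT.
Qed.

Lemma perm_mapnth (s w : seq nat) k :
  perm_eq w (iota 0 k) -> size s = k -> perm_eq (map (nth 0 s) w) s.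
Proof.
move=> pw hs; have := perm_map (nth 0 s) pw.
by rewrite map_nth_iota0 ?hs // -hs take_size.
Qed.

Definition wd n m (x : 'S_m * {set 'I_n} * 'S_(n - m)) : seq nat :=
  map (nth 0 (cA x.1.2)) (perm_word x.1.1) ++ map (nth 0 (cA (~: x.1.2))) (perm_word x.2).

Lemma size_cB n m (A : {set 'I_n}) : #|A| = m -> size (cA (~: A)) = n - m.
Proof.
move=> h; rewrite size_cA; have := cardsC A; rewrite card_ord h; lia.
Qed.

Lemma wd_perm n m (x : 'S_m * {set 'I_n} * 'S_(n - m)) : #|x.1.2| = m -> perm_eq (@wd n m x) (iota 0 n).
Proof.
case: x => [[s A] t] /= h.
apply: perm_trans (perm_cAB A); rewrite /wd /=.
apply: perm_cat; apply: perm_mapnth; rewrite ?perm_pw //.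
  by rewrite size_cA h perm_pw.
by rewrite (size_cB h) perm_pw.
Qed.

Lemma wd_take n m (x : 'S_m * {set 'I_n} * 'S_(n - m)) : #|x.1.2| = m ->
  take m (@wd n m x) = map (nth 0 (cA x.1.2)) (perm_word x.1.1).
Proof. by move=> h; rewrite take_size_cat // size_map size_pw. Qed.

Lemma wd_drop n m (x : 'S_m * {set 'I_n} * 'S_(n - m)) : #|x.1.2| = m ->
  drop m (@wd n m x) = map (nth 0 (cA (~: x.1.2))) (perm_word x.2).
Proof. by move=> h; rewrite drop_size_cat // size_map size_pw. Qed.

Lemma map_nth_inj (s : seq nat) (w w' : seq nat) :
  uniq s -> all (fun i => i < size s) w -> all (fun i => i < size s) w' ->
  map (nth 0 s) w = map (nth 0 s) w' -> w = w'.
Proof.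
move=> us hw hw'.
have inj : {in [pred i | i < size s] &, injective (nth 0 s)}.
  move=> i j hi hj /eqP; rewrite nth_uniq //; exact/eqP.
exact: (inj_in_map inj).
Qed.

Lemma all_pw n (s : 'S_n) k : n <= k -> all (fun i => i < k) (perm_word s).
Proof.
move=> h; apply/allP => i; rewrite mem_pw => hi; exact: leq_trans hi h.
Qed.

Lemma wd_inj n m :
  {in [set x : 'S_m * {set 'I_n} * 'S_(n - m) | #|x.1.2| == m] &, injective (@wd n m)}.
Proof.
move=> [[s A] t] [[s' A'] t']; rewrite !inE /= => /eqP hA /eqP hA' e.
have e1 := congr1 (take m) e; rewrite !wd_take // /= in e1.
have eA : A = A'.
  apply/setP => i; rewrite -!mem_cA.
  rewrite -(perm_mem (perm_mapnth (perm_pw s) (etrans (size_cA A) hA))).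
  rewrite -(perm_mem (perm_mapnth (perm_pw s') (etrans (size_cA A') hA'))).
  by rewrite e1.
subst A'.
have es : s = s'.
  apply: pw_inj; apply: (map_nth_inj (cA_uniq A)) e1; by rewrite size_cA hA all_pw.
have e2 := congr1 (drop m) e; rewrite !wd_drop // /= in e2.
have et : t = t'.
  apply: pw_inj; apply: (map_nth_inj (cA_uniq (~: A))) e2;
  by rewrite (size_cB hA) all_pw.
by rewrite es et.
Qed.

Lemma gd_nth J (s w : seq nat) : sorted ltn s -> all (fun i => i < size s) w ->
  gd J (map (nth 0 s) w) = gd J w.
Proof.
move=> ss /allP hw; apply: gd_map => i j hi hj.
by rewrite nth_mono // hw // mem_nth.
Qed.

Lemma dcount_R J m n : 0 < m -> m <= n -> all (fun j => 0 < j < m) J ->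
  dcount J n + dcount (m :: J) n = 'C(n, m) * dcount J m.
Proof.
move=> m0 mn HJ.
have HJ' : all (fun j => j < m) J.
  by apply: sub_all HJ => j /andP [].
rewrite !dcountE.
set C := fun w => gd J (take m w) && gd [::] (drop m w).
have step1 : #|[pred s : 'S_n | gd J (perm_word s)]| +
             #|[pred s : 'S_n | gd (m :: J) (perm_word s)]| =
             #|[set s : 'S_n | C (perm_word s)]|.
  have -> : #|[pred s : 'S_n | gd J (perm_word s)]| =
            #|[set s : 'S_n | gd J (perm_word s)]| by apply: eq_card => s; rewrite !inE.
  have -> : #|[pred s : 'S_n | gd (m :: J) (perm_word s)]| =
            #|[set s : 'S_n | gd (m :: J) (perm_word s)]| by apply: eq_card => s; rewrite !inE.
  rewrite -cardsUI.
  have -> : [set s : 'S_n | gd J (perm_word s)] :&: [set s : 'S_n | gd (m :: J) (perm_word s)] = set0.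
    apply/setP => s; rewrite !inE; apply/negP => /andP [h1 h2].
    exact: (gd_disj HJ' h1 h2).
  rewrite cards0 addn0; apply: eq_card => s; rewrite !inE.
  by rewrite gd_split ?size_pw.
rewrite step1.
set D := [set x : 'S_m * {set 'I_n} * 'S_(n - m) | #|x.1.2| == m].
set Phi := fun x : 'S_m * {set 'I_n} * 'S_(n - m) => mkperm n (wd x).
have PhiE x : x \in D -> perm_word (Phi x) = wd x.
  by rewrite inE => /eqP h; apply: mkpermK; apply: wd_perm.
have Phiinj : {in D &, injective Phi}.
  move=> x y xD yD /(congr1 (@perm_word n)); rewrite !PhiE // => e.
  exact: wd_inj.
have cD : #|D| = n`!.
  have -> : D = setX (setX [set: 'S_m] [set A : {set 'I_n} | #|A| == m]) [set: 'S_(n - m)].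
    by apply/setP => -[[s A] t]; rewrite !inE /= andbT.
  rewrite !cardsX !cardsT !card_Sn card_draws card_ord.
  by rewrite -(bin_fact mn); lia.
have img : Phi @: D = [set: 'S_n].
  apply/eqP; rewrite eqEcard subsetT cardsT card_Sn card_in_imset // cD.
  by rewrite leqnn.
have step2 : [set s : 'S_n | C (perm_word s)] = Phi @: [set x in D | C (wd x)].
  apply/setP => s; rewrite inE; apply/idP/imsetP.
    move=> Cs; have : s \in Phi @: D by rewrite img inE.
    case/imsetP => x xD e; exists x => //.
    by rewrite inE xD -PhiE // -e.
  case=> x; rewrite inE => /andP [xD Cx] ->; by rewrite PhiE.
rewrite step2 card_in_imset; last first.
  move=> x y; rewrite !inE => /andP [xD _] /andP [yD _]; by apply: Phiinj; rewrite inE.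
have step3 : [set x in D | C (wd x)] =
   setX (setX [set s : 'S_m | gd J (perm_word s)] [set A : {set 'I_n} | #|A| == m])
        [set t : 'S_(n - m) | gd [::] (perm_word t)].
  apply/setP => -[[s A] t]; rewrite !inE /=.
  case: (boolP (#|A| == m)) => /= hA; last by rewrite andbF.
  rewrite andbT /C wd_take ?(eqP hA) // wd_drop ?(eqP hA) //=.
  rewrite !gd_nth ?cA_sorted //.
    by rewrite (size_cB (eqP hA)) all_pw.
  by rewrite size_cA (eqP hA) all_pw.
rewrite step3 !cardsX card_draws card_ord.
have -> : #|[set s : 'S_m | gd J (perm_word s)]| = dcount J m.
  by rewrite dcountE; apply: eq_card => s; rewrite !inE.
have -> : #|[set t : 'S_(n - m) | gd [::] (perm_word t)]| = 1.
  by rewrite -(dcount_nil (n - m)) dcountE; apply: eq_card => s; rewrite !inE.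
by rewrite muln1 mulnC dcountE.
Qed.

Local Open Scope ring_scope.


Lemma maxI_nil : maxI [::] = 0%N.
Proof. by rewrite /maxI big_nil. Qed.

Lemma leq_maxI I i : i \in I -> (i <= maxI I)%N.
Proof. by move=> h; rewrite /maxI (leq_bigmax_seq (F := id)). Qed.

Lemma maxI_le I k : (forall i, i \in I -> i <= k)%N -> (maxI I <= k)%N.
Proof. by move=> h; apply/bigmax_leqP_seq => i hi _; exact: h. Qed.

Lemma maxI_mem I : I != [::] -> maxI I \in I.
Proof.
elim: I => [//|a I IH] _.
have -> : maxI (a :: I) = maxn a (maxI I) by rewrite /maxI big_cons.
case: (eqVneq I [::]) => [->|ne].
  by rewrite maxI_nil maxn0 mem_head.
rewrite inE; case: (leqP (maxI I) a) => h.
  by rewrite eqxx.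
by rewrite IH ?orbT.
Qed.

Lemma dcount_mono_le K m n : (m <= n)%N -> (dcount K m <= dcount K n)%N.
Proof.
elim: n => [|n IH]; first by rewrite leqn0 => /eqP ->.
rewrite leq_eqVlt => /orP [/eqP ->//|h].
exact: leq_trans (IH h) (dcount_mono K n).
Qed.

Definition Bp (m : nat) : {poly rat} :=
  (m`!%:R)^-1 *: \prod_(i < m) ('X - (i%:R)%:P).

Lemma prod_nat (m n : nat) : (m <= n)%N ->
  \prod_(i < m) ((n%:R : rat) - i%:R) = (n ^_ m)%:R.
Proof.
elim: m => [|m IH] h; first by rewrite big_ord0 ffactn0.
rewrite big_ord_recr /= IH ?(ltnW h) // ffactnSr natrM natrB //.
exact: ltnW.
Qed.

Lemma prod_m1 (m : nat) :
  \prod_(i < m) ((-1 : rat) - i%:R) = (-1) ^+ m * m`!%:R.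
Proof.
elim: m => [|m IH]; first by rewrite big_ord0 expr0 mul1r.
rewrite big_ord_recr /= IH factS natrM exprS -[m.+1]addn1 natrD.
ring.
Qed.

Lemma Bp_nat m n : (m <= n)%N -> (Bp m).[n%:R] = ('C(n, m))%:R.
Proof.
move=> h; rewrite /Bp hornerZ horner_prod.
under eq_bigr do rewrite hornerXsubC.
rewrite prod_nat // -bin_ffact natrM mulrC mulfK //.
by rewrite pnatr_eq0 -lt0n fact_gt0.
Qed.

Lemma Bp_m1 m : (Bp m).[-1] = (-1) ^+ m.
Proof.
rewrite /Bp hornerZ horner_prod.
under eq_bigr do rewrite hornerXsubC.
rewrite prod_m1 mulrC mulfK //.
by rewrite pnatr_eq0 -lt0n fact_gt0.
Qed.

Lemma poly_eq_nat (p q : {poly rat}) k :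
  (forall n, (k < n)%N -> p.[n%:R] = q.[n%:R]) -> p = q.
Proof.
move=> H; apply/eqP; rewrite -subr_eq0; apply/negPn/negP => nz.
set rs := [seq ((k.+1 + i)%N%:R : rat) | i <- iota 0 (size (p - q))].
have hall : all (root (p - q)) rs.
  apply/allP => x /mapP [i _ ->]; rewrite /root hornerD hornerN H ?subrr //.
  by rewrite ltnS leq_addr.
have hu : uniq rs.
  rewrite map_inj_uniq ?iota_uniq // => i j /eqP; rewrite eqr_nat => /eqP.
  exact: addnI.
have := max_poly_roots nz hall hu.
by rewrite size_map size_iota ltnn.
Qed.


Definition Claim (I : seq nat) :=
  exists p : {poly rat},
    (forall n, (maxI I < n)%N -> p.[n%:R] = (dcount I n)%:R) /\
    0 <= (-1) ^+ maxI I * p.[-1] /\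
    (forall n, ((maxI I).+2 <= n)%N -> (-1) ^+ maxI I * p.[-1] <= (dcount I n)%:R).

Lemma claim_nil : Claim [::].
Proof.
exists 1; rewrite maxI_nil expr0 mul1r hornerC; split; last split.
- by move=> n _; rewrite hornerC dcount_nil.
- by [].
- by move=> n _; rewrite dcount_nil.
Qed.

Lemma sign_sq (M : nat) : (-1) ^+ M * (-1) ^+ M = 1 :> rat.
Proof. by rewrite -signr_odd; case: (odd M); rewrite ?expr0 ?expr1 ?mulr1 ?mulrNN ?mulr1. Qed.

Lemma claim_all k : forall I, all (fun i => 0 < i)%N I -> (maxI I <= k)%N -> Claim I.
Proof.
elim: k => [|k IH] I hpos hk.
  case: (eqVneq I [::]) => [->|ne]; first exact: claim_nil.
  have := allP hpos _ (maxI_mem ne); lia.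
case: (eqVneq I [::]) => [->|ne]; first exact: claim_nil.
set M := maxI I.
have MI : M \in I by exact: maxI_mem.
have M0 : (0 < M)%N by exact: (allP hpos).
set Im := [seq i <- I | (i < M)%N].
have hIm : all (fun j => 0 < j < M)%N Im.
  apply/allP => j; rewrite mem_filter => /andP [h1 h2]; rewrite h1 andbT.
  exact: (allP hpos).
have hImpos : all (fun i => 0 < i)%N Im.
  by apply: sub_all hIm => j /andP [].
have eqI : I =i M :: Im.
  move=> x; rewrite inE mem_filter.
  case: (boolP (x \in I)) => hx; last by rewrite andbF orbF; apply/esym/eqP => e; rewrite e MI in hx.
  have := leq_maxI hx; rewrite -/M /=; lia.
have M'lt : (maxI Im < M)%N.
  have : (maxI Im <= M.-1)%N.
    apply: maxI_le => i; rewrite mem_filter => /andP [h _]; lia.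
  lia.
have [q [hq [c0 cle]]] := IH Im hImpos (ltac:(lia)).
set M' := maxI Im in M'lt hq c0 cle.
set d := dcount Im M.
have dI n : dcount I n = dcount (M :: Im) n by exact: dcount_eq.
have R n : (M <= n)%N -> (dcount Im n + dcount (M :: Im) n = 'C(n, M) * d)%N.
  by move=> mn; apply: dcount_R.
have sg : (-1) ^+ M = (-1) ^+ (M - M') * (-1) ^+ M' :> rat.
  by rewrite -exprD subnK // ltnW.
have cE : (-1) ^+ M * (d%:R *: Bp M - q).[-1] =
          d%:R - (-1) ^+ (M - M') * ((-1) ^+ M' * q.[-1]).
  rewrite hornerD hornerN hornerZ Bp_m1 mulrA -sg.
  rewrite (_ : (-1) ^+ M * (d%:R * (-1) ^+ M - q.[-1]) =
     d%:R * ((-1) ^+ M * (-1) ^+ M) - (-1) ^+ M * q.[-1]); last by ring.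
  by rewrite sign_sq mulr1.
have d0 : 0 <= d%:R :> rat by rewrite ler0n.
have key n : (M.+2 <= n)%N -> d%:R + (-1) ^+ M' * q.[-1] <= (dcount I n)%:R.
  move=> hn.
  have h1 := cle M.+1 (ltac:(lia)).
  have h2 : (d + dcount Im M.+1 <= dcount I n)%N.
    rewrite dI; apply: leq_trans (dcount_A M0 hIm) _.
    exact: dcount_mono_le.
  have h3 : (d + dcount Im M.+1)%:R <= (dcount I n)%:R :> rat by rewrite ler_nat.
  rewrite natrD in h3; lra.
exists (d%:R *: Bp M - q); rewrite -/M; split; last split.
- move=> n hn.
  rewrite hornerD hornerN hornerZ Bp_nat ?(ltnW hn) // hq; last by lia.
  have := congr1 (fun x => x%:R : rat) (R n (ltnW hn)).
  rewrite natrD natrM dI => e.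
  have -> : (dcount (M :: Im) n)%:R = ('C(n, M))%:R * d%:R - (dcount Im n)%:R :> rat.
    by rewrite -e; ring.
  ring.
- rewrite cE -[(-1) ^+ (M - M')]signr_odd; case h: (odd (M - M')); rewrite ?expr1 ?expr0.
    lra.
  have h2 : (M'.+2 <= M)%N.
    have : (M - M')%N != 1%N by apply/eqP => e; rewrite e in h.
    lia.
  have := cle M h2; rewrite -/d; lra.
- move=> n hn; have hkey := key n hn.
  rewrite cE -[(-1) ^+ (M - M')]signr_odd; case h: (odd (M - M')); rewrite ?expr1 ?expr0; lra.
Qed.

Theorem main (I : seq nat) (hI : all (fun i => (0 < i)%N) I) :
  (exists p : {poly rat},
      forall n : nat, (maxI I < n)%N -> p.[n%:R] = (dcount I n)%:R) /\
  (forall p : {poly rat},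
      (forall n : nat, (maxI I < n)%N -> p.[n%:R] = (dcount I n)%:R) ->
      0 <= (-1) ^+ maxI I * p.[-1]).
Proof.
have [p [hp [c0 _]]] := claim_all hI (leqnn (maxI I)).
split; first by exists p.
move=> p' hp'.
have -> : p' = p by apply: (poly_eq_nat (k := maxI I)) => n hn; rewrite hp ?hp'.
exact: c0.
Qed.

Unset Implicit Arguments.

Theorem proposition3p10 (I : seq nat) (hI : all (fun i => (0 < i)%N) I) :
  (exists p : {poly rat},
      forall n : nat, (maxI I < n)%N -> p.[n%:R] = (dcount I n)%:R) /\
  (forall p : {poly rat},
      (forall n : nat, (maxI I < n)%N -> p.[n%:R] = (dcount I n)%:R) ->
      0 <= (-1) ^+ maxI I * p.[-1]).
Proof. exact: main hI. Qed.
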